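(* Let $\{a_i\},\{b_i\},\{c_i\},\{d_i\}$ ($i\in\mathbb{Z}$) be complex sequences and $m,n\ge0$ integers such that $a_j-c_j$, $a_j-d_j$, $b_j-c_j$, $b_j-d_j$ are nonzero for $-n\le j\le m$. Then $$\sum_{k=-n}^{m}(a_k-b_k)(c_k-d_k)\frac{\prod_{j=1}^{k-1}(a_j-c_j)}{\prod_{j=1}^{k}(a_j-d_j)}\frac{\prod_{j=1}^{k-1}(b_j-d_j)}{\prod_{j=1}^{k}(b_j-c_j)} =\frac{\prod_{j=1}^{m}(a_j-c_j)}{\prod_{j=1}^{m}(a_j-d_j)}\frac{\prod_{j=1}^{m}(b_j-d_j)}{\prod_{j=1}^{m}(b_j-c_j)}-\frac{\prod_{j=-n}^{0}(a_j-d_j)}{\prod_{j=-n}^{0}(a_j-c_j)}\frac{\prod_{j=-n}^{0}(b_j-c_j)}{\prod_{j=-n}^{0}(b_j-d_j)}.$$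
   Context: Products over integer ranges follow the convention: $\prod_{j=k}^{m}A_j=A_k\cdots A_m$ if $m\ge k$; $=1$ if $m=k-1$; $=(A_{m+1}\cdots A_{k-1})^{-1}$ if $m\le k-2$. *)

(* Defs.v *)
From HB Require Import structures.
From mathcomp Require Import all_boot all_order all_algebra.
From mathcomp Require Import reals.
From mathcomp.real_closed Require Import complex.
Set Implicit Arguments. Unset Strict Implicit. Unset Printing Implicit Defensive.
Import Order.TTheory GRing.Theory Num.Theory.
Local Open Scope ring_scope.

(* Product over an integer range with the paper's convention:
   prodZ A k m = A_k ... A_m            if m >= k,
               = 1                      if m = k - 1,
               = (A_{m+1} ... A_{k-1})^-1 if m <= k - 2. *)
Definition prodZ {F : fieldType} (A : int -> F) (k m : int) : F :=
  if (k <= m)%R then \prod_(0 <= i < absz (m - k + 1)%R) A (k + i%:Z)%R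
  else if m == (k - 1)%R then 1
  else (\prod_(0 <= i < absz (k - 1 - m)%R) A (m + 1 + i%:Z)%R)^-1.

Definition sumZ {F : fieldType} (f : int -> F) (lo hi : int) : F :=
  \sum_(0 <= i < absz (hi - lo + 1)%R) f (lo + i%:Z)%R.

(* Main.v *)
Require Import Defs.
From HB Require Import structures.
From mathcomp Require Import all_boot all_order all_algebra.
From mathcomp Require Import reals.
From mathcomp.real_closed Require Import complex.
From mathcomp Require Import zify.
Import Order.TTheory GRing.Theory Num.Theory.
Local Open Scope ring_scope.
From mathcomp Require Import ring.

Lemma prodZ_pos (F: fieldType) (A: int->F) (p : nat) :
  prodZ A 1 p%:Z = \prod_(0 <= i < p) A (1 + i%:Z).
Proof.
rewrite /prodZ; case: p => [|p] /=; first by rewrite big_nil.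

by rewrite subn1 addn1.
Qed.

Lemma prodZ_neg (F: fieldType) (A: int->F) (p : nat) :
  prodZ A 1 (- p.+1%:Z) = (\prod_(0 <= i < p.+1) A (- p.+1%:Z + 1 + i%:Z))^-1.
Proof.
rewrite /prodZ.
have -> : (1 <= - p.+1%:Z) = false by lia.
have -> : (- p.+1%:Z == 1 - 1) = false by lia.
have -> : absz (1 - 1 - - p.+1%:Z) = p.+1 by lia.
by [].
Qed.

Lemma prodZ_neg' (F: fieldType) (A: int->F) k (p : nat) : k = - p.+1%:Z ->
  prodZ A 1 k = (\prod_(0 <= i < p.+1) A (- p.+1%:Z + 1 + i%:Z))^-1.
Proof. by move=> ->; apply: prodZ_neg. Qed.

Lemma prodZ_rec (F: fieldType) (A: int->F) k : A k != 0 -> prodZ A 1 k = prodZ A 1 (k-1) * A k.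
Proof.
move=> Ak.
case: k Ak => [[|p]|p] Ak.
- by rewrite /prodZ /= big_nat1 add0r mulVf.
- have -> : Posz p.+1 - 1 = p%:Z by lia.
  rewrite !prodZ_pos big_nat_recr //=; congr (_ * A _); lia.
- have -> : Negz p = - p.+1%:Z by [].
  rewrite NegzE in Ak.
  have -> : - p.+1%:Z - 1 = - p.+2%:Z by lia.
  rewrite !prodZ_neg [in RHS]big_nat_recl //.
  have -> : - p.+2%:Z + 1 + 0%:Z = - p.+1%:Z by lia.
  rewrite invfM mulrAC mulVf // mul1r; congr (_^-1).
  apply: eq_bigr => i _; congr (A _); lia.
Qed.
Local Open Scope complex_scope.

Theorem corollary3p4 (R : realType) (a b c d : int -> R[i]) (m n : nat) :
  (forall j : int, (- n%:Z <= j)%R -> (j <= m%:Z)%R ->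
     [/\ a j - c j != 0, a j - d j != 0, b j - c j != 0 & b j - d j != 0]) ->
  sumZ (fun k : int =>
          (a k - b k) * (c k - d k)
          * (prodZ (fun j => a j - c j) 1 (k - 1) / prodZ (fun j => a j - d j) 1 k)
          * (prodZ (fun j => b j - d j) 1 (k - 1) / prodZ (fun j => b j - c j) 1 k))
       (- n%:Z) m%:Z
  = prodZ (fun j => a j - c j) 1 m%:Z / prodZ (fun j => a j - d j) 1 m%:Z
      * (prodZ (fun j => b j - d j) 1 m%:Z / prodZ (fun j => b j - c j) 1 m%:Z)
    - prodZ (fun j => a j - d j) (- n%:Z) 0 / prodZ (fun j => a j - c j) (- n%:Z) 0
      * (prodZ (fun j => b j - c j) (- n%:Z) 0 / prodZ (fun j => b j - d j) (- n%:Z) 0).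
Proof.
move=> H.
set P := fun k : int => prodZ (fun j => a j - c j) 1 k / prodZ (fun j => a j - d j) 1 k
      * (prodZ (fun j => b j - d j) 1 k / prodZ (fun j => b j - c j) 1 k).
have step : forall k : int, (- n%:Z <= k)%R -> (k <= m%:Z)%R ->
   (a k - b k) * (c k - d k)
          * (prodZ (fun j => a j - c j) 1 (k - 1) / prodZ (fun j => a j - d j) 1 k)
          * (prodZ (fun j => b j - d j) 1 (k - 1) / prodZ (fun j => b j - c j) 1 k)
   = P k - P (k - 1).
  move=> k h1 h2; have [h3 h4 h5 h6] := H k h1 h2.
  rewrite /P (@prodZ_rec _ (fun j => a j - c j) k h3) (@prodZ_rec _ (fun j => a j - d j) k h4) (@prodZ_rec _ (fun j => b j - c j) k h5) (@prodZ_rec _ (fun j => b j - d j) k h6).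
  rewrite !invfM.
  move: (prodZ (fun j => a j - c j) 1 (k - 1)) (prodZ (fun j => a j - d j) 1 (k - 1))
        (prodZ (fun j => b j - d j) 1 (k - 1)) (prodZ (fun j => b j - c j) 1 (k - 1)) => x y z w.
  move: (y^-1) (w^-1) => y' w'.
  field.
  by rewrite h4 h5.
rewrite /sumZ (telescope_sumr_eq (fun i : nat => P (- n%:Z + i%:Z - 1))); last 2 first.
- lia.
- move=> i /andP [_ hi].
  rewrite step; [| lia | lia].
  congr (P _ - P _); lia.
match goal with |- P ?x - P ?y = _ =>
  have -> : x = m%:Z by lia end.
rewrite /P; congr (_ - _).
rewrite !(@prodZ_neg' _ _ _ n); try lia.
have E : forall A : int -> R[i], (\prod_(0 <= i < n.+1) A (- n.+1%:Z + 1 + i%:Z)) = prodZ A (- n%:Z) 0.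
  move=> A; rewrite /prodZ.
  have -> : (- n%:Z <= 0) = true by lia.
  have -> : absz (0 - - n%:Z + 1) = n.+1 by lia.
  apply: eq_bigr => i _; congr (A _); lia.
rewrite (E (fun j => a j - c j)) (E (fun j => a j - d j)) (E (fun j => b j - c j)) (E (fun j => b j - d j)) !invrK.
by congr (_ * _); apply: mulrC.
Qed.
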